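(* Let $G$ be a finite simple graph with a perfect matching $M$, let $\mathcal{C}$ be an optimal edge $2$-colouring of $G$, and let $\mathcal{F}$, $P$, $\mathcal{C}_M$, $P_j,D_j,U_j,V_j,S_j$ and the sets $\mathcal{H},\mathcal{L}$ be as in the context. Then: (a) $|S_j|\ge |P_j|+1$ for all $j\in\mathcal{C}_M$; (b) $\mathrm{rp}(S_j)\ge (|P_j|-1)/2$ for all $j\in\mathcal{C}_M$; (c) if $D_j\ne\emptyset$ then $j\in\mathcal{H}$; (d) for $j\in\mathcal{L}$, every vertex of $S_j$ has its $M$-partner also in $S_j$; furthermore $S_j$ has a unique maximum element $v^\ast$ with respect to $\preceq_{\mathcal{F}}$; (e) $|S_j|\ge 4$ for every $j\in\mathcal{L}$.
   Context: $G\setminus M$ is the spanning subgraph with edge set $E(G)\setminus M$, with connected components $C_1,\dots,C_h$. An edge $2$-colouring assigns colours to edges (not necessarily properly) so that each vertex sees at most $2$ distinct colours; optimal means maximum number of colours. $\mathrm{mcl}(u)$ is the colour of the $M$-edge at $u$; $\mathcal{C}_M$ is the set of colours used on $M$ (matching colours) and $\mathcal{C}_N$ the remaining colours (non-matching colours). For a colour $i$, $G[i]$ is the subgraph spanned by the edges of colour $i$; for $i\in\mathcal{C}_N$ it is called a non-matching colour component, and $k_m$ denotes the number of non-matching colour components contained in $C_m$. Forests: rooted trees, $r(F)$ roots, $l(F)$ leaves (non-root vertices with no children); each tree has a depth-first indexing $\mathrm{dfs}_T$ (descendants get larger indices) and order $u\preceq_T v$ iff $\mathrm{dfs}_T(u)\ge\mathrm{dfs}_T(v)$;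 in a forest, vertices of different trees are incomparable. $(T_1,T_2)$ is a cascading pair if they are vertex-disjoint or $r(T_2)\in l(T_1)$ and $|V(T_1)\cap V(T_2)|=1$; $\mathcal{F}=\{F_1,\dots,F_l\}$ is a cascading sequence of forests if $V(F_i)\cap V(F_j)=\emptyset$ for $|i-j|\ge2$ and every tree of $F_i$ with every tree of $F_{i+1}$ forms a cascading pair. $V(\mathcal{F})=\bigcup_F V(F)$; an internal vertex of $\mathcal{F}$ is a vertex of some $F\in\mathcal{F}$ that is neither a root nor a leaf of $F$, and $\mathrm{Int}(\mathcal{F})$ is the set of these. $\preceq_{\mathcal{F}}$ is the transitive closure of ''$x\preceq_F y$ for some $F\in\mathcal{F}$''; $x\mathcal{F}y$ is the path $xFy$ in the forest $F\in\mathcal{F}$ containing an $x$–$y$ path. Standing data: $\mathcal{F}$ is a cascading sequence of forests in $G\setminus M$ with $\sum_{F\in\mathcal{F}}|l(F)|=\sum_{m=1}^h(k_m-1)$, with $\mathrm{Int}(\mathcal{F})\cap V(H)=\emptyset$ for every non-matching colour component $H$, and such that for each $F\in\mathcal{F}$ and $u\in r(F)\cup l(F)$ every edge of $F$ at $u$ has colour $\mathrm{mcl}(u)$. $P=\{(u_i,v_i)\}$ is a set of $\sum_{m}(k_m-1)$ pairs of vertices of $V(\mathcal{F})$ such that: (a) the $u_i$ are pairwise distinct; (b) $u_i\prec_{\mathcal{F}}v_i$ and the path $u_i\mathcal{F}v_i$ exists; (c) $\mathrm{mcl}(u_i)=\mathrm{mcl}(v_i)$; (d) $u_i\mathcal{F}v_i$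 is monochromatic of colour $\mathrm{mcl}(u_i)$; (e) every internal vertex $z$ of $u_i\mathcal{F}v_i$ has $\mathrm{mcl}(z)\ne\mathrm{mcl}(u_i)$; (f) for $i\ne j$ with $u_iv_i,u_jv_j\in M$ the paths $u_i\mathcal{F}v_i,u_j\mathcal{F}v_j$ share no internal vertex. For $j\in\mathcal{C}_M$: $P_j=\{(u,v)\in P:\mathrm{mcl}(u)=\mathrm{mcl}(v)=j\}$; $D_j=\{(u,v)\in P_j: uv\in M\}$ (denoted $C_j$ in the paper); $U_j$, $V_j$ are the sets of first and second coordinates of pairs in $P_j$; $S_j=U_j\cup V_j$. For an $M$-monochromatic set $S$ (all $M$-edges at vertices of $S$ have the same colour), $\mathrm{rp}(S)=i(S;M)-1$ where $i(S;M)$ is the number of $M$-edges incident with $S$. A colour $j\in\mathcal{C}_M$ is high ($j\in\mathcal{H}$) if $\mathrm{rp}(S_j)\ge(|P_j|-|D_j|)/2$, and low ($j\in\mathcal{L}$) otherwise. *)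

(* Defs.v *)
From mathcomp Require Import all_boot all_order all_algebra.
Set Implicit Arguments. Unset Strict Implicit. Unset Printing Implicit Defensive.
Import Order.TTheory GRing.Theory Num.Theory.

Definition simple_graph (V : finType) (E : {set {set V}}) : Prop :=
  forall e, e \in E -> #|e| = 2.

Definition perfect_matching (V : finType) (E M : {set {set V}}) : Prop :=
  M \subset E /\ forall v : V, #|[set e in M | v \in e]| = 1.

(* An edge colouring is a map from edges to colours (natural numbers);
   only its values on E matter. *)
Definition seen_colours (V : finType) (E : {set {set V}}) (c : {set V} -> nat)
  (v : V) : seq nat := undup [seq c e | e <- enum [set e in E | v \in e]].

Definition edge_2_colouring (V : finType) (E : {set {set V}}) (c : {set V} -> nat) : Prop :=
  forall v, size (seen_colours E c v) <= 2.

Definition used_colours (V : finType) (E : {set {set V}}) (c : {set V} -> nat) : seq nat :=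
  undup [seq c e | e <- enum E].

Definition num_colours (V : finType) (E : {set {set V}}) (c : {set V} -> nat) : nat :=
  size (used_colours E c).

Definition optimal_2_colouring (V : finType) (E : {set {set V}}) (c : {set V} -> nat) : Prop :=
  edge_2_colouring E c /\
  forall c' : {set V} -> nat, edge_2_colouring E c' -> num_colours E c' <= num_colours E c.

Definition medge (V : finType) (M : {set {set V}}) (u : V) : {set V} :=
  odflt set0 [pick e in M | u \in e].
Definition mcl (V : finType) (M : {set {set V}}) (c : {set V} -> nat) (u : V) : nat :=
  c (medge M u).

Definition matching_colour (V : finType) (M : {set {set V}}) (c : {set V} -> nat) (j : nat) : bool :=
  j \in [seq c e | e <- enum M].
Definition nonmatching_colour (V : finType) (E M : {set {set V}}) (c : {set V} -> nat) (i : nat) : bool :=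
  (i \in used_colours E c) && ~~ matching_colour M c i.

Definition colour_vertices (V : finType) (E : {set {set V}}) (c : {set V} -> nat) (i : nat) : {set V} :=
  \bigcup_(e in E | c e == i) e.

(* components C_1..C_h of G \ M (spanning subgraph), as vertex sets *)
Definition GminusM_rel (V : finType) (E M : {set {set V}}) : rel V :=
  fun x y => [set x; y] \in E :\: M.
Definition components (V : finType) (E M : {set {set V}}) : {set {set V}} :=
  [set [set y | connect (GminusM_rel E M) x y] | x : V].

Definition k_of (V : finType) (E M : {set {set V}}) (c : {set V} -> nat) (C : {set V}) : nat :=
  count (fun i => nonmatching_colour E M c i && (colour_vertices E c i \subset C))
        (used_colours E c).

Definition sum_k (V : finType) (E M : {set {set V}}) (c : {set V} -> nat) : int :=
  \sum_(C in components E M) (Posz (k_of E M c C) - 1)%R.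

(* A rooted forest: vertex set, parent map (roots are fixed points), and a
   depth-first index (compared only inside one tree). *)
Record forest (V : finType) := Forest {
  fV : {set V};
  fpar : V -> V;
  fdfs : V -> nat }.

Definition forest0 (V : finType) : forest V := Forest set0 id (fun _ => 0).

Section ForestDefs.
Variable V : finType.
Implicit Types (F : forest V) (x y u w : V).

Definition froot F x : V := iter #|V| (fpar F) x.
Definition anc F x : {set V} := [set iter n (fpar F) x | n : 'I_#|V|.+1].
Definition roots F : {set V} := [set v in fV F | fpar F v == v].
Definition children F u : {set V} := [set w in fV F | (fpar F w == u) && (w != u)].
Definition leaves F : {set V} := [set v in fV F | (fpar F v != v) && (children F v == set0)].
Definition internal F : {set V} := fV F :\: (roots F :|: leaves F).
Definition tree F (r : V) : {set V} := [set w in fV F | froot F w == r].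
Definition desc F u : {set V} := [set w in fV F | u \in anc F w].
Definition fedges F : {set {set V}} :=
  [set [set w; fpar F w] | w in [set w in fV F | fpar F w != w]].

(* F is a rooted forest in G \ M with a depth-first (preorder) indexing of
   each tree: indices are injective within a tree and the descendants of every
   vertex u occupy exactly the index interval [dfs u, dfs u + #desc u). *)
Definition is_forest (E M : {set {set V}}) F : Prop :=
  [/\ forall v, v \in fV F -> fpar F v \in fV F,
      forall v, v \in fV F -> fpar F v != v -> [set v; fpar F v] \in E :\: M,
      forall v, v \in fV F -> fpar F (froot F v) = froot F v,
      forall u w, u \in fV F -> w \in fV F -> froot F u = froot F w ->
                  fdfs F u = fdfs F w -> u = w &
      forall u, u \in fV F ->
        desc F u = [set w in fV F | (froot F w == froot F u) &&
                      (fdfs F u <= fdfs F w < fdfs F u + #|desc F u|)] ].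

Definition cascading_pair F1 (r1 : V) F2 (r2 : V) : bool :=
  [disjoint tree F1 r1 & tree F2 r2] ||
  ((r2 \in leaves F1 :&: tree F1 r1) && (#|tree F1 r1 :&: tree F2 r2| == 1)).

Definition cascading (Fs : seq (forest V)) : Prop :=
  (forall i j, i.+2 <= j -> j < size Fs ->
     [disjoint fV (nth (forest0 V) Fs i) & fV (nth (forest0 V) Fs j)]) /\
  (forall i, i.+1 < size Fs -> forall r1 r2,
     r1 \in roots (nth (forest0 V) Fs i) -> r2 \in roots (nth (forest0 V) Fs i.+1) ->
     cascading_pair (nth (forest0 V) Fs i) r1 (nth (forest0 V) Fs i.+1) r2).

Definition VFs (Fs : seq (forest V)) : {set V} := \bigcup_(F <- Fs) fV F.
Definition IntFs (Fs : seq (forest V)) : {set V} := \bigcup_(F <- Fs) internal F.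

Definition precF F x y : bool :=
  [&& x \in fV F, y \in fV F, froot F x == froot F y & fdfs F y <= fdfs F x].
Definition precFs (Fs : seq (forest V)) x y : bool :=
  ((x == y) ==> (x \in VFs Fs)) &&
  connect (fun a b => has (fun F => precF F a b) Fs) x y.

Definition same_tree F x y : bool :=
  [&& x \in fV F, y \in fV F & froot F x == froot F y].
Definition path_exists (Fs : seq (forest V)) x y : bool :=
  has (fun F => same_tree F x y) Fs.
Definition path_forest (Fs : seq (forest V)) x y : forest V :=
  nth (forest0 V) Fs (find (fun F => same_tree F x y) Fs).
Definition path_diff F x y : {set V} := (anc F x :\: anc F y) :|: (anc F y :\: anc F x).
Definition path_edges F x y : {set {set V}} := [set [set w; fpar F w] | w in path_diff F x y].
Definition path_vertices F x y : {set V} :=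
  path_diff F x y :|: [set fpar F w | w in path_diff F x y] :|: [set x; y].
Definition path_internal F x y : {set V} := path_vertices F x y :\: [set x; y].
Definition pathE (Fs : seq (forest V)) x y := path_edges (path_forest Fs x y) x y.
Definition pathInt (Fs : seq (forest V)) x y := path_internal (path_forest Fs x y) x y.

End ForestDefs.

Definition forest_data (V : finType) (E M : {set {set V}}) (c : {set V} -> nat)
  (Fs : seq (forest V)) : Prop :=
  [/\ forall i, i < size Fs -> is_forest E M (nth (forest0 V) Fs i),
      cascading Fs,
      Posz (\sum_(F <- Fs) #|leaves F|) = sum_k E M c,
      forall i, nonmatching_colour E M c i -> [disjoint IntFs Fs & colour_vertices E c i] &
      forall i u, i < size Fs ->
        u \in roots (nth (forest0 V) Fs i) :|: leaves (nth (forest0 V) Fs i) ->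
        forall e, e \in fedges (nth (forest0 V) Fs i) -> u \in e -> c e = mcl M c u ].

Definition pair_data (V : finType) (E M : {set {set V}}) (c : {set V} -> nat)
  (Fs : seq (forest V)) (P : {set V * V}) : Prop :=
  [/\ Posz #|P| = sum_k E M c,
      forall p, p \in P -> (p.1 \in VFs Fs) && (p.2 \in VFs Fs),
      {in P &, forall p q, p.1 = q.1 -> p = q},
      forall p, p \in P ->
                  [&& precFs Fs p.1 p.2, p.1 != p.2 & path_exists Fs p.1 p.2] &
      forall p, p \in P -> mcl M c p.1 = mcl M c p.2 ] /\
  [/\ forall p, p \in P -> forall e, e \in pathE Fs p.1 p.2 -> c e = mcl M c p.1,
      forall p, p \in P -> forall z, z \in pathInt Fs p.1 p.2 -> mcl M c z != mcl M c p.1 &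
      forall p q, p \in P -> q \in P -> p != q ->
        [set p.1; p.2] \in M -> [set q.1; q.2] \in M ->
        [disjoint pathInt Fs p.1 p.2 & pathInt Fs q.1 q.2] ].

Definition Pj (V : finType) (M : {set {set V}}) (c : {set V} -> nat) (P : {set V * V}) (j : nat)
  : {set V * V} := [set p in P | (mcl M c p.1 == j) && (mcl M c p.2 == j)].
Definition Dj (V : finType) (M : {set {set V}}) (c : {set V} -> nat) (P : {set V * V}) (j : nat)
  : {set V * V} := [set p in Pj M c P j | [set p.1; p.2] \in M].
Definition Uj (V : finType) (M : {set {set V}}) (c : {set V} -> nat) (P : {set V * V}) (j : nat)
  : {set V} := [set p.1 | p in Pj M c P j].
Definition Vj (V : finType) (M : {set {set V}}) (c : {set V} -> nat) (P : {set V * V}) (j : nat)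
  : {set V} := [set p.2 | p in Pj M c P j].
Definition Sj (V : finType) (M : {set {set V}}) (c : {set V} -> nat) (P : {set V * V}) (j : nat)
  : {set V} := Uj M c P j :|: Vj M c P j.

Definition rp (V : finType) (M : {set {set V}}) (S : {set V}) : int :=
  (Posz #|[set e in M | ~~ [disjoint e & S]]| - 1)%R.

Definition high (V : finType) (M : {set {set V}}) (c : {set V} -> nat) (P : {set V * V}) (j : nat)
  : bool :=
  (((rp M (Sj M c P j))%:~R : rat) >= ((#|Pj M c P j|)%:R - (#|Dj M c P j|)%:R) / 2)%R.

(* Main.v *)
From mathcomp Require Import all_boot all_order all_algebra.
From mathcomp Require Import zify lra.
Require Import Defs.
Import Order.TTheory GRing.Theory Num.Theory.
Set Implicit Arguments. Unset Strict Implicit.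

Section Anti.
Variable V : finType.
Variables E M : {set {set V}}.
Implicit Types (F G : forest V) (Fs : seq (forest V)).

Definition Rst Fs : rel V := fun a b => has (fun F => precF F a b) Fs.

Lemma iter_in F n x : is_forest E M F -> x \in fV F -> iter n (fpar F) x \in fV F.
Proof.
case=> h1 _ _ _ _ hx; elim: n => //= n IH; exact: h1.
Qed.

Lemma froot_in F x : is_forest E M F -> x \in fV F -> froot F x \in fV F.
Proof. exact: iter_in. Qed.

Lemma froot_root F x : is_forest E M F -> x \in fV F -> fpar F (froot F x) = froot F x.
Proof. by case=> _ _ h3 _ _; exact: h3. Qed.

Lemma froot_idem F x : is_forest E M F -> x \in fV F -> froot F (froot F x) = froot F x.
Proof. by move=> hF hx; rewrite /froot iter_fix //; exact: froot_root. Qed.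

Lemma root_min F x : is_forest E M F -> x \in fV F -> fdfs F (froot F x) <= fdfs F x.
Proof.
move=> hF hx; have hr := froot_in hF hx.
case: hF => _ _ _ _ h5.
have : x \in desc F (froot F x).
  rewrite inE hx /=; apply/imsetP; exists ord_max => //.
move: (h5 _ hr) => ->; rewrite inE => /and3P [_ _ /andP [h _]]; exact: h.
Qed.

Lemma connect_map (e e' : rel V) (f : V -> V) :
  (forall a b, e a b -> connect e' (f a) (f b)) ->
  forall x y, connect e x y -> connect e' (f x) (f y).
Proof.
move=> H x y /connectP [p pth ->]; elim: p x pth => [|z p IH] x /=.
  by rewrite connect0.
by case/andP=> h pth; apply: connect_trans (H _ _ h) (IH _ pth).
Qed.

Lemma antisym Fs : (forall i, i < size Fs -> is_forest E M (nth (forest0 V) Fs i)) ->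
  cascading Fs -> forall x y, connect (Rst Fs) x y -> connect (Rst Fs) y x -> x = y.
Proof.
elim/last_ind: Fs => [|Fs F IH] hF hC.
  move=> x y /connectP [[|z p] /= pth ->] //.
have hnth i : nth (forest0 V) (rcons Fs F) i =
   (if i < size Fs then nth (forest0 V) Fs i else if i == size Fs then F else forest0 V).
  exact: nth_rcons.
have hFF : is_forest E M F.
  by move: (hF (size Fs)); rewrite hnth ltnn eqxx size_rcons; apply.
have hFs : forall i, i < size Fs -> is_forest E M (nth (forest0 V) Fs i).
  by move=> i hi; move: (hF i); rewrite hnth hi size_rcons; apply; apply: ltnW.
have hCs : cascading Fs.
  case: hC => c1 c2; split.
    move=> i k hik hk; move: (c1 i k hik); rewrite !hnth hk (ltn_trans _ hk) //.
      by rewrite size_rcons; apply; apply: ltnW.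
    by apply: leq_trans hik; rewrite ltnS leqW.
  move=> i hi r1 r2; move: (c2 i); rewrite !hnth hi (ltn_trans _ hi) //.
  by rewrite size_rcons; apply; apply: ltnW.
have K : forall i, i < size Fs -> forall b, b \in fV (nth (forest0 V) Fs i) -> b \in fV F -> froot F b = b.
  move=> i hi b hbG hbF.
  have hG := hFs i hi.
  case: hC => c1 c2.
  case: (ltnP i.+1 (size Fs)) => hik.
    move: (c1 i (size Fs) hik); rewrite !hnth hi ltnn eqxx size_rcons => /(_ (ltnSn _)).
    by move/disjointFr => /(_ b hbG); rewrite hbF.
  have ei : i.+1 = size Fs by apply/eqP; rewrite eqn_leq hik hi.
  move: (c2 i); rewrite !hnth hi ei ltnn eqxx size_rcons => /(_ (ltnSn _)).
  move=> /(_ (froot (nth (forest0 V) Fs i) b) (froot F b)).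
  rewrite !inE froot_in // froot_root // eqxx froot_in // froot_root // eqxx.
  move=> /(_ isT isT) /orP [].
    move/disjointFr => /(_ b); rewrite !inE hbG hbF !eqxx /= => /(_ isT) //.
  case/andP=> hl /cards1P [z hz].
  have : b \in [set z] by rewrite -hz !inE hbG hbF !eqxx.
  have : froot F b \in [set z].
    rewrite -hz inE; move: hl; rewrite inE => /andP [_ ->] /=.
    by rewrite !inE froot_in // froot_idem // eqxx.
  by rewrite !inE => /eqP -> /eqP ->.
pose rho := fun v => if v \in fV F then froot F v else v.
have step : forall a b, Rst (rcons Fs F) a b -> connect (Rst Fs) (rho a) (rho b).
  move=> a b; rewrite /Rst has_rcons => /orP [].
    by case/and4P => ha hb /eqP hr _; rewrite /rho ha hb hr connect0.
  move=> /(has_nthP (forest0 V)) [i hi hp]; have := hp; case/and4P => ha hb _ _.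
  have ea : rho a = a by rewrite /rho; case: ifP => // h; exact: K i hi a ha h.
  have eb : rho b = b by rewrite /rho; case: ifP => // h; exact: K i hi b hb h.
  rewrite ea eb; apply: connect1; apply/(has_nthP (forest0 V)); by exists i.
have inv : forall x, x \in fV F -> forall y, connect (Rst (rcons Fs F)) x y ->
    y \in fV F -> froot F y = froot F x -> fdfs F y <= fdfs F x.
  move=> x hx y /connectP [p pth ->].
  suff: forall z, ((z \in fV F) && (froot F z == froot F x) ==> (fdfs F z <= fdfs F x)) ->
     path (Rst (rcons Fs F)) z p ->
     ((last z p \in fV F) && (froot F (last z p) == froot F x) ==> (fdfs F (last z p) <= fdfs F x)).
    move=> /(_ x); rewrite hx eqxx leqnn /= => /(_ isT pth) H hy hr.
    by move: H; rewrite hy hr eqxx /=.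
  elim: p {pth} => [|w p IHp] z /= Iz //; case/andP => hzw pth; apply: IHp pth.
  apply/implyP => /andP [hw /eqP hwr].
  move: hzw; rewrite /Rst has_rcons => /orP [].
    case/and4P => hz _ /eqP hzr hd.
    by move: Iz; rewrite hz hzr hwr eqxx /= => h; exact: leq_trans hd h.
  case/(has_nthP (forest0 V)) => i hi /and4P [_ hwG _ _].
  rewrite -{1}(K i hi w hwG hw) hwr; exact: root_min hFF hx.
move=> x y hxy hyx.
have := IH hFs hCs _ _ (connect_map step hxy) (connect_map step hyx).
rewrite /rho; case: ifP => hx; case: ifP => hy.
- move=> hr; case: (hFF) => _ _ _ h4 _; apply: h4 => //.
  by apply/eqP; rewrite eqn_leq (inv x hx y hxy hy (esym hr)) (inv y hy x hyx hx hr).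
- by move=> e; move: hy; rewrite -e froot_in.
- by move=> e; move: hx; rewrite e froot_in.
- done.
Qed.
End Anti.

Lemma rat_ge (m p d : nat) : (((Posz m - 1)%:~R : rat) >= (p%:R - d%:R) / 2)%R = (p + 2 <= 2 * m + d)%N.
Proof.
rewrite mul2n -addnn -(@ler_nat rat) !natrD intrB.
idtac.
apply/idP/idP => h; lra.
Qed.

Lemma rat_ge1 (m p : nat) : (((Posz m - 1)%:~R : rat) >= (p%:R - 1) / 2)%R = (p + 1 <= 2 * m)%N.
Proof.
rewrite mul2n -addnn -(@ler_nat rat) !natrD intrB.
apply/idP/idP => h; lra.
Qed.


Lemma ar1 p s m d : p + 1 <= s -> s <= 2 * m -> 0 < d -> p + 2 <= 2 * m + d.
Proof. lia. Qed.
Lemma ar2 p s m d : p + 1 <= s -> s <= 2 * m -> ~~ (p + 2 <= 2 * m + d) ->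
  d = 0 /\ s = 2 * m /\ s = p + 1.
Proof. move/negP; lia. Qed.
Lemma ar3 s m u u' : s = 2 * m -> u = true + u' -> u <= 2 * m -> s <= u' -> False.
Proof. lia. Qed.
Lemma ar4 s u d p : s = p + 1 -> u = p -> u + d = s -> 2 <= d -> False.
Proof. lia. Qed.
Lemma ar5 s m : s = 2 * m -> 2 <= m -> 3 < s.
Proof. lia. Qed.
Lemma ar6 p s m : s = 2 * m -> s = p + 1 -> m < 2 -> 0 < p -> p = 1.
Proof. lia. Qed.
Lemma ar7 s p : s = p + 1 -> p = 1 -> s <= 2.
Proof. lia. Qed.

Lemma find_out (T : finType) (R : rel T) (S U A : {set T}) :
  (forall x y, R x y -> R y x -> x = y) -> (forall x y z, R x y -> R y z -> R x z) ->
  (forall x, R x x) -> A \subset S ->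
  (forall s, s \in A -> s \in U -> exists2 v, v \in A & R s v && (s != v)) ->
  A != set0 -> exists2 t, t \in A & t \notin U.
Proof.
move=> AS TR RF sAS Hs /set0Pn [s0 hs0].
pose below s := [set t in S | R t s].
suff H : forall n s, s \in A -> #|S| - #|below s| < n -> exists2 t, t \in A & t \notin U.
  by apply: (H #|S|.+1 s0 hs0); rewrite ltnS leq_subr.
elim=> [//|n IHn] s hs hn.
case: (boolP (s \in U)) => hsU; last by exists s.
case: (Hs s hs hsU) => v hv /andP [hsv hne]; apply: (IHn v hv).
have hp : below s \proper below v.
  rewrite properE; apply/andP; split.
    by apply/subsetP => t; rewrite !inE => /andP [-> h] /=; exact: TR h hsv.
  apply/subsetPn; exists v; first by rewrite inE (subsetP sAS _ hv) RF.
  rewrite inE; apply/negP => /andP [_ hvs].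
  by move: hne; rewrite (AS _ _ hsv hvs) eqxx.
have h1 := proper_card hp.
have h2 : #|below v| <= #|S| by apply: subset_leq_card; apply/subsetP => t; rewrite inE => /andP [].
lia.
Qed.

Local Open Scope ring_scope.

Theorem lemma8 (V : finType) (E M : {set {set V}}) (c : {set V} -> nat)
  (Fs : seq (forest V)) (P : {set V * V}) :
  simple_graph E -> perfect_matching E M -> optimal_2_colouring E c ->
  forest_data E M c Fs -> pair_data E M c Fs P ->
  forall j : nat, matching_colour M c j -> Pj M c P j != set0 ->
  [/\ (#|Pj M c P j| + 1 <= #|Sj M c P j|)%N,
      ((rp M (Sj M c P j))%:~R : rat) >= ((#|Pj M c P j|)%:R - 1) / 2,
      Dj M c P j != set0 -> high M c P j,
      ~~ high M c P j ->
        (forall s w, s \in Sj M c P j -> [set s; w] \in M -> w \in Sj M c P j) /\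
        (exists! v, v \in Sj M c P j /\
                    forall s, s \in Sj M c P j -> precFs Fs s v) &
      ~~ high M c P j -> (4 <= #|Sj M c P j|)%N ].
Proof.
move=> hsg [hMs hM1] _ [hFs hC _ _ _] [[_ hVF hinj hprec _] _] j _ hPne.
have AS := antisym hFs hC.
set R := connect (Rst Fs).
have TR : forall x y z, R x y -> R y z -> R x z by move=> x y z; apply: connect_trans.
have RF : forall x, R x x by move=> x; apply: connect0.
have hPj : forall p, p \in Pj M c P j -> p \in P by move=> p; rewrite inE => /andP [].
have hpr : forall p, p \in Pj M c P j -> R p.1 p.2 && (p.1 != p.2).
  move=> p hp; case/and3P: (hprec p (hPj p hp)) => /andP [_ h1] h2 _.
  by rewrite h2 andbT; exact: h1.
have hS1 : forall p, p \in Pj M c P j -> p.1 \in Sj M c P j.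
  by move=> p hp; rewrite inE; apply/orP; left; apply/imsetP; exists p.
have hS2 : forall p, p \in Pj M c P j -> p.2 \in Sj M c P j.
  by move=> p hp; rewrite inE; apply/orP; right; apply/imsetP; exists p.
have hSV : forall s, s \in Sj M c P j -> s \in VFs Fs.
  move=> s; rewrite inE => /orP [] /imsetP [p hp ->].
    by case/andP: (hVF p (hPj p hp)).
  by case/andP: (hVF p (hPj p hp)).
have cardU : #|Uj M c P j| = #|Pj M c P j|.
  apply: card_in_imset => p q hp hq; exact: hinj (hPj p hp) (hPj q hq).
have USsub : Uj M c P j \subset Sj M c P j by apply: subsetUl.
have succ : forall s, s \in Uj M c P j -> exists2 p, p \in Pj M c P j & s = p.1.
  by move=> s /imsetP [p hp ->]; exists p.
have Sne : Sj M c P j != set0.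
  by case/set0Pn: hPne => p hp; apply/set0Pn; exists p.1; exact: hS1.
have [t htS htU] : exists2 t, t \in Sj M c P j & t \notin Uj M c P j.
  apply: (find_out AS TR RF (subxx _)) => // s hs hsU.
  by case: (succ s hsU) => p hp ->; exists p.2; [exact: hS2 | exact: hpr].
have ha : (#|Pj M c P j| + 1 <= #|Sj M c P j|)%N.
  rewrite -cardU addn1; apply: proper_card; rewrite properE USsub /=.
  by apply/subsetPn; exists t.
set S := Sj M c P j.
set Mi := [set e in M | ~~ [disjoint e & S]].
have {}ha : (#|Pj M c P j| + 1 <= #|S|)%N := ha.
have rpE : rp M S = (Posz #|Mi| - 1)%R by [].
have cov : S \subset \bigcup_(e in Mi) e.
  apply/subsetP => s hs; move/eqP: (hM1 s) => /cards1P [e0 he0].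
  have : e0 \in [set e in M | s \in e] by rewrite he0 set11.
  rewrite inE => /andP [he0M hse0].
  apply/bigcupP; exists e0 => //; rewrite inE he0M /=.
  by apply/negP => /disjointFr /(_ hse0); rewrite hs.
have cardMi : (#|\bigcup_(e in Mi) e| <= 2 * #|Mi|)%N.
  have : (#|\bigcup_(e in Mi) e| <= \sum_(e in Mi) #|e|)%N.
    apply: (big_ind2 (fun (A : {set V}) n => (#|A| <= n)%N)) => //.
      by rewrite cards0.
    move=> A a B b h1 h2; apply: leq_trans (leq_add h1 h2).
    exact: (leq_card_setU A B).1.
  rewrite (eq_bigr (fun _ => 2%N)); first by rewrite sum_nat_const mulnC.
  move=> e; rewrite inE => /andP [he _]; apply: hsg; exact: (subsetP hMs).
have hSm : (#|S| <= 2 * #|Mi|)%N by apply: leq_trans (subset_leq_card cov) cardMi.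
have hb : ((rp M S)%:~R : rat) >= ((#|Pj M c P j|)%:R - 1) / 2.
  rewrite rpE rat_ge1; exact: leq_trans ha hSm.
have hc : Dj M c P j != set0 -> high M c P j.
  move=> hD; rewrite /high -/S rpE rat_ge.
  apply: (ar1 ha hSm); by rewrite card_gt0.
have hnh : ~~ high M c P j -> #|Dj M c P j| = 0%N /\ #|S| = (2 * #|Mi|)%N /\ #|S| = (#|Pj M c P j| + 1)%N.
  rewrite /high -/S rpE rat_ge; exact: ar2 ha hSm.
have hpart : ~~ high M c P j -> forall s w, s \in S -> [set s; w] \in M -> w \in S.
  move=> hh s w hs hsw; case: (hnh hh) => _ [h1 h2].
  apply/negPn/negP => hw.
  have hwU : w \in \bigcup_(e in Mi) e.
    apply/bigcupP; exists [set s; w]; last by rewrite !inE eqxx orbT.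
    rewrite inE hsw /=; by apply/negP => /disjointFr /(_ (set21 s w)); rewrite hs.
  have : S \subset (\bigcup_(e in Mi) e) :\ w.
    apply/subsetP => x hx; rewrite !inE (subsetP cov _ hx) andbT.
    by apply/negP => /eqP hxw; move: hw; rewrite -hxw hx.
  move/subset_leq_card; move: (cardsD1 w (\bigcup_(e in Mi) e)); rewrite hwU => e1; exact: ar3 h1 e1 cardMi.
split => //.
- move=> hh; split; first exact: hpart.
  case: (hnh hh) => _ [h1 h2].
  have hall : forall s, s \in S -> R s t.
    move=> s0 hs0; apply/negPn/negP => hn.
    have [t' ht'A ht'U] : exists2 t', t' \in [set s in S | ~~ R s t] & t' \notin Uj M c P j.
      apply: (find_out AS TR RF) => //.
      - move=> s; rewrite inE => /andP [hs hst] hsU.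
        case: (succ s hsU) => p hp es; exists p.2; last by rewrite es; exact: hpr.
        rewrite inE hS2 //=; apply/negP => hv; move: hst; rewrite es.
        by case/andP: (hpr p hp) => hr _; rewrite (TR _ _ _ hr hv).
      - by apply/set0Pn; exists s0; rewrite inE hs0.
    move: ht'A; rewrite inE => /andP [ht'S ht't].
    have hne : t' != t by apply/negP => /eqP e; move: ht't; rewrite e RF.
    have : [set t'; t] \subset S :\: Uj M c P j.
      by apply/subsetP => x; rewrite in_set2 => /orP [] /eqP ->; rewrite in_setD ?ht'U ?htU ?ht'S ?htS.
    move/subset_leq_card; rewrite cards2 hne.
    move: (cardsID (Uj M c P j) S); rewrite (setIidPr USsub) -/S => e1.
    exact: ar4 h2 cardU e1.
  exists t; split.
    split => // s hs; rewrite /precFs; apply/andP; split.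
      by apply/implyP => _; exact: hSV.
    exact: hall s hs.
  move=> v [hvS hv]; apply: AS; last exact: hall.
  by case/andP: (hv t htS).
- move=> hh; case: (hnh hh) => hD [h1 h2].
  case: (leqP 2 #|Mi|) => hm; first exact: ar5 h1 hm.
  have hP1 : #|Pj M c P j| = 1%N.
    apply: (ar6 h1 h2 hm); by rewrite card_gt0.
  case/set0Pn: hPne => p hp.
  case/andP: (hpr p hp) => _ hne.
  have eS : S = [set p.1; p.2].
    apply/eqP; rewrite eq_sym eqEcard cards2 hne.
    apply/andP; split; last exact: ar7 h2 hP1.
    by apply/subsetP => x; rewrite in_set2 => /orP [] /eqP ->; [exact: hS1 | exact: hS2].
  move/eqP: (hM1 p.1) => /cards1P [e0 he0].
  have : e0 \in [set e in M | p.1 \in e] by rewrite he0 set11.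
  rewrite inE => /andP [he0M hpe0].
  have : #|e0| == 2%N by apply/eqP; apply: hsg; exact: (subsetP hMs).
  case/cards2P => x [y [hxy exy]].
  have [w [hw1 hw2]] : exists w, e0 = [set p.1; w] /\ w != p.1.
    move: hpe0; rewrite exy !inE => /orP [] /eqP ->.
      by exists y; split; rewrite // eq_sym.
    by exists x; split; [rewrite setUC | ].
  have hwS : w \in S by apply: (hpart hh p.1); [exact: hS1 | rewrite -hw1].
  move: hwS; rewrite eS !inE (negbTE hw2) /= => /eqP ew.
  have : p \in Dj M c P j by rewrite inE hp /= -ew -hw1.
  by move=> hpD; move: hD; rewrite (cardD1 p) hpD.
Qed.
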